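(* Let $(X,\rho)$ be a metric space, $A,B$ nonempty subsets of $X$, and $T:A\cup B\to A\cup B$ a cyclic map for which there is $\lambda\in[0,1)$ such that $$\rho(Tx,Ty)\le\lambda\max\{\rho(x,y),\rho(x,Tx),\rho(y,Ty)\}+(1-\lambda)\,\mathrm{dist}(A,B)$$ for all $x\in A$, $y\in B$. Then for every $x\in A\cup B$ the sequence of iterates $\{T^nx\}_{n=1}^\infty$ is bounded.
   Context: $\mathrm{dist}(A,B)=\inf\{\rho(a,b):a\in A,\ b\in B\}$. A map $T:A\cup B\to A\cup B$ is cyclic if $T(A)\subseteq B$ and $T(B)\subseteq A$. *)

(* Defs.v *)
From Stdlib Require Import Reals.
From Coquelicot Require Import Coquelicot.
Open Scope R_scope.

Definition is_metric {X : Type} (rho : X -> X -> R) : Prop :=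
  (forall x y, 0 <= rho x y) /\
  (forall x y, rho x y = 0 <-> x = y) /\
  (forall x y, rho x y = rho y x) /\
  (forall x y z, rho x z <= rho x y + rho y z).

Definition dist_set {X : Type} (rho : X -> X -> R) (A B : X -> Prop) : R :=
  real (Glb_Rbar (fun r => exists a b, A a /\ B b /\ r = rho a b)).

Definition cyclic_map {X : Type} (A B : X -> Prop) (T : X -> X) : Prop :=
  (forall x, A x -> B (T x)) /\ (forall y, B y -> A (T y)).

Definition bounded_seq {X : Type} (rho : X -> X -> R) (u : nat -> X) : Prop :=
  exists M : R, forall n m : nat, (1 <= n)%nat -> (1 <= m)%nat -> rho (u n) (u m) <= M.

(* Main.v *)
Require Import Defs.
From Stdlib Require Import Reals Lra Lia Psatz.
From Coquelicot Require Import Coquelicot.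
Open Scope R_scope.

Theorem lemma32 (X : Type) (rho : X -> X -> R) (A B : X -> Prop) (T : X -> X)
  (lambda : R) :
  is_metric rho ->
  (exists a, A a) -> (exists b, B b) ->
  cyclic_map A B T ->
  0 <= lambda < 1 ->
  (forall x y, A x -> B y ->
     rho (T x) (T y) <=
       lambda * Rmax (rho x y) (Rmax (rho x (T x)) (rho y (T y)))
       + (1 - lambda) * dist_set rho A B) ->
  forall x, A x \/ B x -> bounded_seq rho (fun n => Nat.iter n T x).
Proof.
  intros [Hpos [Hzero [Hsym Htri]]] _ _ [HAB HBA] Hl H x Hx.
  set (D := dist_set rho A B) in *.
  set (opp := fun u v => (A u /\ B v) \/ (B u /\ A v)).
  assert (Hs : forall u v, opp u v -> rho (T u) (T v) <=
     lambda * Rmax (rho u v) (Rmax (rho u (T u)) (rho v (T v))) + (1 - lambda) * D).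
  { intros u v [[Hu Hv]|[Hu Hv]].
    - apply H; auto.
    - rewrite Hsym, (Hsym u v), (Rmax_comm (rho u (T u))). apply H; auto. }
  set (xs := fun n => Nat.iter n T x).
  assert (HxAB : forall n, A (xs n) \/ B (xs n)).
  { induction n; simpl; [exact Hx|]. destruct IHn; [right|left]; auto. }
  assert (Hopp1 : forall n, opp (xs n) (xs (S n))).
  { intro n. destruct (HxAB n); [left|right]; simpl; auto. }
  assert (Hopp2 : forall k : nat, opp (xs 0%nat) (xs (2*k+1)%nat)).
  { induction k. apply Hopp1.
    replace (2 * S k + 1)%nat with (S (S (2*k+1))) by lia.
    destruct IHk as [[? ?]|[? ?]]; [left|right]; simpl; auto. }
  set (d := fun n => rho (xs n) (xs (S n))).
  set (K := Rmax (d 0%nat) D).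
  assert (HK : forall n, d n <= K).
  { induction n. apply Rmax_l.
    destruct (Rle_or_lt (d (S n)) K) as [h|h]; [exact h|exfalso].
    pose proof (Hs _ _ (Hopp1 n)) as Hn.
    change (d (S n) <= lambda * Rmax (d n) (Rmax (d n) (d (S n))) + (1-lambda)*D) in Hn.
    assert (Hm : Rmax (d n) (Rmax (d n) (d (S n))) <= d (S n)).
    { repeat apply Rmax_lub; lra. }
    assert (lambda * Rmax (d n) (Rmax (d n) (d (S n))) <= lambda * d (S n))
      by (apply Rmult_le_compat_l; lra).
    assert (HD : D <= K) by apply Rmax_r.
    assert ((1-lambda) * d (S n) <= (1-lambda) * D) by lra.
    assert (d (S n) <= D) by (apply Rmult_le_reg_l with (1-lambda); lra).
    lra. }
  assert (HK0 : 0 <= K) by (apply Rle_trans with (d 0%nat); [apply Hpos|apply Rmax_l]).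
  set (e := fun n => rho (xs n) (xs 0%nat)).
  assert (Hodd : forall n, e (S n) <= e n + K).
  { intro n. unfold e. pose proof (HK n). unfold d in H0.
    pose proof (Htri (xs (S n)) (xs n) (xs 0%nat)). rewrite Hsym in H0. lra. }
  set (Q := (lambda * K + (1-lambda)*D + K) / (1 - lambda)).
  set (B0 := Rmax 0 Q).
  assert (Heven : forall k, e (2*k)%nat <= B0).
  { induction k.
    - simpl. unfold e. replace (rho (xs 0%nat) (xs 0%nat)) with 0
        by (symmetry; apply Hzero; auto). apply Rmax_l.
    - replace (2 * S k)%nat with (S (S (2*k))) by lia.
      assert (E1 : e (S (S (2*k))) <= rho (xs (S (S (2*k)))) (xs 1%nat) + d 0%nat).
      { unfold e, d. rewrite (Hsym (xs 0%nat)). apply Htri. }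
      pose proof (Hs _ _ (Hopp2 k)) as Hk.
      replace (2*k+1)%nat with (S (2*k)) in Hk by lia.
      rewrite (Hsym (T (xs 0%nat))) in Hk.
      change (rho (xs (S (S (2*k)))) (xs 1%nat) <= lambda *
        Rmax (rho (xs 0%nat) (xs (S (2*k)))) (Rmax (d 0%nat) (d (S (2*k))))
        + (1-lambda)*D) in Hk.
      rewrite (Hsym (xs 0%nat)) in Hk. change (rho (xs (S (2*k))) (xs 0%nat)) with (e (S (2*k))) in Hk.
      assert (Hm : Rmax (e (S (2 * k))) (Rmax (d 0%nat) (d (S (2 * k)))) <= e (2*k)%nat + K).
      { pose proof (Hodd (2*k)%nat). pose proof (HK 0%nat). pose proof (HK (S (2*k))).
        assert (0 <= e (2*k)%nat) by apply Hpos.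
        repeat apply Rmax_lub; lra. }
      assert (lambda * Rmax (e (S (2 * k))) (Rmax (d 0%nat) (d (S (2 * k)))) <= lambda * (e (2*k)%nat + K))
        by (apply Rmult_le_compat_l; lra).
      assert (HQ : (1-lambda) * Q = lambda * K + (1-lambda)*D + K) by (unfold Q; field; lra).
      assert (HQB : Q <= B0) by apply Rmax_r.
      assert (HB0 : 0 <= B0) by apply Rmax_l.
      assert (lambda * e (2*k)%nat <= lambda * B0) by (apply Rmult_le_compat_l; lra).
      assert ((1-lambda) * Q <= (1-lambda) * B0) by (apply Rmult_le_compat_l; lra).
      pose proof (HK 0%nat). lra. }
  assert (Hall : forall n, e n <= B0 + K).
  { intro n. destruct (Nat.Even_or_Odd n) as [[k Hk]|[k Hk]]; subst n.
    - pose proof (Heven k). lra.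
    - replace (2*k+1)%nat with (S (2*k)) by lia. pose proof (Heven k). pose proof (Hodd (2*k)%nat). lra. }
  exists (2 * (B0 + K)). intros n m _ _.
  change (rho (xs n) (xs m) <= 2 * (B0 + K)).
  pose proof (Htri (xs n) (xs 0%nat) (xs m)). rewrite (Hsym (xs 0%nat)) in H0.
  pose proof (Hall n). pose proof (Hall m). unfold e in *. lra.
Qed.
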